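(* Let $P$ and $Q$ be upper primes. Then $PQ-QP$ lies in the two-sided ideal of $\mathcal{A}$ generated by $\{U(LR)-(LR)U : U \text{ an upper prime}\}$.
   Context: $\mathcal{A}$ is the free associative $\mathbb{C}$-algebra on noncommuting generators $L,R$; words are finite products of these letters. A word is balanced if it contains equally many $L$'s and $R$'s. A word is prime if it is nonempty, balanced, and not a product of two nonempty balanced words. For a balanced word $W=a_1\cdots a_n$, $e_k(W)=\sum_{i=1}^k\overline{a_i}$ with $\overline{R}=1$, $\overline{L}=-1$. A prime $P$ of length $n$ is an upper prime if $e_k(P)>0$ for all $1\le k\le n-1$. *)

(* Defs.v *)
From HB Require Import structures.
From mathcomp Require Import all_boot all_algebra.
From mathcomp Require Import Rstruct.
From mathcomp.real_closed Require Import complex.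
From mathcomp.multinomials Require Import monalg.

Set Implicit Arguments.
Unset Strict Implicit.
Unset Printing Implicit Defensive.

Import GRing.Theory Num.Theory.
Local Open Scope ring_scope.

Definition CC : comUnitRingType := complex Rdefinitions.R.

Inductive letter := Lt | Rt.

Definition letter_to_bool (a : letter) : bool := if a is Rt then true else false.
Definition bool_to_letter (b : bool) : letter := if b then Rt else Lt.
Lemma letter_boolK : cancel letter_to_bool bool_to_letter.
Proof. by case. Qed.
HB.instance Definition _ := Equality.copy letter (can_type letter_boolK).
HB.instance Definition _ := Choice.copy letter (can_type letter_boolK).

Definition word := seq letter.

(* The free associative C-algebra on L, R. *)
Definition FA := {malg CC[fmonom letter]}.

Definition wrd (w : word) : FA := << FMonom w >>.

Definition nR (w : word) : nat := count (pred1 Rt) w.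
Definition nL (w : word) : nat := count (pred1 Lt) w.

Definition balanced (w : word) : Prop := nR w = nL w.

Definition prime_word (w : word) : Prop :=
  w <> [::] /\ balanced w /\
  ~ (exists u v : word, u <> [::] /\ v <> [::] /\ balanced u /\ balanced v
                        /\ w = u ++ v).

Definition ek (k : nat) (w : word) : int :=
  (nR (take k w))%:Z - (nL (take k w))%:Z.

Definition upper_prime (P : word) : Prop :=
  prime_word P /\ forall k : nat, (1 <= k <= (size P).-1)%N -> 0 < ek k P.

Definition in_twosided_ideal (A : nzRingType) (S : A -> Prop) (x : A) : Prop :=
  exists (n : nat) (a b s : 'I_n -> A),
    (forall i, S (s i)) /\ x = \sum_(i < n) a i * s i * b i.

Definition gen_set (x : FA) : Prop :=
  exists U : word, upper_prime U /\
    x = wrd U * wrd [:: Lt; Rt] - wrd [:: Lt; Rt] * wrd U.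

(* Main.v *)
Require Import Defs.
From HB Require Import structures.
From mathcomp Require Import all_boot all_algebra.
From mathcomp.multinomials Require Import monalg.
From mathcomp Require Import zify.
Import GRing.Theory.
Set Implicit Arguments.
Unset Strict Implicit.
Local Open Scope ring_scope.

Lemma wrd_cat (u v : word) : wrd (u ++ v) = wrd u * wrd v.
Proof.
rewrite /wrd malgM_def fgmulUU mulr1.
congr (<< _ *g _ >>).
apply: val_inj => /=. by rewrite fmM.
Qed.
Lemma wrd_nil : wrd [::] = 1.
Proof. rewrite /wrd. congr (<< _ >>). by apply: val_inj => /=; rewrite fm1. Qed.


Definition h (w : word) : int := (nR w)%:Z - (nL w)%:Z.

Lemma h_nil : h [::] = 0.
Proof. by []. Qed.
Lemma h_R w : h (Rt :: w) = h w + 1.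
Proof. rewrite /h /nR /nL /=. lia. Qed.
Lemma h_L w : h (Lt :: w) = h w - 1.
Proof. rewrite /h /nR /nL /=. lia. Qed.
Lemma h_cat u v : h (u ++ v) = h u + h v.
Proof. rewrite /h /nR /nL !count_cat. lia. Qed.

Fixpoint ok (n : nat) (w : word) : bool :=
  match w with
  | [::] => n == 0%N
  | Rt :: w' => ok n.+1 w'
  | Lt :: w' => (0 < n)%N && ok n.-1 w'
  end.

Lemma okP n w : ok n w <-> ((forall k, 0 <= n%:Z + h (take k w)) /\ n%:Z + h w = 0).
Proof.
elim: w n => [|[] w IH] n /=.
- split; first by move/eqP => ->; split => // k.
  by case=> _ /eqP; rewrite addr0.
- case: n => [|n] /=.
  + split => // -[H1 _]; have := H1 1%N; rewrite /= h_L take0 /h /=; lia.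
  + rewrite IH; split.
    * case=> H1 H2; split; last by rewrite h_L; move: H2; lia.
      case=> [|k] /=; first by rewrite addr0.
      by have := H1 k; rewrite h_L; lia.
    * case=> H1 H2; split; last by rewrite h_L in H2; lia.
      by move=> k; have := H1 k.+1; rewrite /= h_L; lia.
- rewrite IH; split.
  + case=> H1 H2; split; last by rewrite h_R; move: H2; lia.
    case=> [|k] /=; first by rewrite addr0.
    by have := H1 k; rewrite h_R; lia.
  + case=> H1 H2; split; last by rewrite h_R in H2; lia.
    by move=> k; have := H1 k.+1; rewrite /= h_R; lia.
Qed.

Lemma ok_cat m n u v : ok m u -> ok n v -> ok (m + n) (u ++ v).
Proof.
elim: u m => [|[] u IH] m /=.
- by move/eqP => ->.
- case: m => [|m] //= H1 H2; exact: IH.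
- by move=> H1 H2; rewrite -addSn; apply: IH.
Qed.

Lemma ok_split n w : ok n.+1 w -> exists u v, w = u ++ Lt :: v /\ ok 0 u /\ ok n v.
Proof.
move: {2}(size w) (leqnn (size w)) => N.
elim: N w n => [|N IH] [|[] w] n //=.
- by move=> _ H; exists [::], w.
- move=> Hs /IH [|u [v [E [Hu Hv]]]]; first by lia.
  have [|u' [v' [E' [Hu' Hv']]]] := IH v _ _ Hv.
    by move: Hs; rewrite E size_cat /=; lia.
  exists (Rt :: u ++ Lt :: u'), v'; split; first by rewrite E E' /= -catA.
  split => //=.
  have := @ok_cat 0 1 u (Lt :: u') Hu; rewrite /= Hu'; apply => //.
Qed.

Inductive dyck : word -> Prop :=
| dnil : dyck [::]
| dcons u v : dyck u -> dyck v -> dyck (Rt :: u ++ Lt :: v).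

Lemma dyck_ok w : dyck w -> ok 0 w.
Proof.
elim => // u v _ Hu _ Hv /=.
have := @ok_cat 0 1 u (Lt :: v) Hu; rewrite /= Hv; apply => //.
Qed.

Lemma ok_dyck w : ok 0 w -> dyck w.
Proof.
move: {2}(size w) (leqnn (size w)) => n; elim: n w => [|n IH] [|[] w] //=.
- move=> _ _; exact: dnil.
- move=> _ _; exact: dnil.
- move=> Hs /ok_split [u [v [E [Hu Hv]]]]; subst w.
  apply: dcons; apply: IH => //; move: Hs; rewrite size_cat /=; lia.
Qed.

Lemma ekE k w : ek k w = h (take k w).
Proof. by []. Qed.

Lemma balE w : balanced w <-> h w = 0.
Proof. rewrite /balanced /h; split; lia. Qed.

Lemma dyck_up u : dyck u -> upper_prime (Rt :: u ++ [:: Lt]).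
Proof.
move=> /dyck_ok /okP [Hk Hh].
have Hek : forall k, (1 <= k <= (size (Rt :: u ++ [:: Lt])).-1)%N ->
    0 < ek k (Rt :: u ++ [:: Lt]).
  move=> [|k] //=; rewrite size_cat /= addn1 => Hk'.
  rewrite ekE /= takel_cat // h_R; have := Hk k; lia.
split => //; split => //; split.
  apply/balE; rewrite h_R h_cat h_L; have : h [::] = 0 by []. move: Hh; lia.
move=> [u' [v' [Hu [Hv [Bu [Bv E]]]]]].
have Hc : (1 <= size u' <= (size (Rt :: u ++ [:: Lt])).-1)%N.
  rewrite E size_cat.
  case: u' Hu {E Bu} => // a u' _; case: v' Hv {Bv} => // b v' _ /=; lia.
have := Hek _ Hc; rewrite ekE E take_size_cat //; move/balE: Bu => ->.
by [].
Qed.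

Lemma up_dyck P : upper_prime P -> exists u, dyck u /\ P = Rt :: u ++ [:: Lt].
Proof.
move=> [[Hne [/balE Hb _]] Hek].
case: P Hne Hb Hek => [|x P'] // _.
case/lastP: P' => [|u y].
  by case: x => /=; rewrite /h /=.
rewrite -cats1 => Hb Hek.
have Hx : x = Rt.
  case: x Hb Hek => // _ Hek; have := Hek 1%N.
  rewrite /= size_cat /= addn1 ekE /= take0 /h /=.
  by move=> /(_ isT).
subst x.
have Hy : y = Lt.
  case: y Hb Hek => // Hb Hek; have := Hek (size u).+1.
  rewrite /= size_cat /= addn1 leqnn /= ekE /= take_size_cat // h_R.
  rewrite h_R h_cat in Hb; move: Hb; rewrite /h /=; lia.
subst y.
have Hu : h u = 0 by move: Hb; rewrite h_R h_cat /h /=; lia.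
exists u; split => //; apply/ok_dyck/okP; split; last by rewrite Hu.
move=> k; case: (leqP k (size u)) => Hk.
  have := Hek k.+1; rewrite /= size_cat /= addn1 ltnS Hk /= ekE /= takel_cat // h_R.
  move=> /(_ isT); lia.
rewrite take_oversize ?Hu //; exact: ltnW.
Qed.

Section Alg.
Variable Rg : nzRingType.
Variable S : Rg -> Prop.
Variable w : word -> Rg.
Hypothesis wcat : forall u v, w (u ++ v) = w u * w v.
Hypothesis wnil : w [::] = 1.
Hypothesis wgen : forall u, dyck u ->
  S (w (Rt :: u ++ [:: Lt]) * w [:: Lt; Rt] - w [:: Lt; Rt] * w (Rt :: u ++ [:: Lt])).

Definition Id (x : Rg) := in_twosided_ideal S x.

Lemma Id0 : Id 0.
Proof.
exists 0%N, (fun _ => 0), (fun _ => 0), (fun _ => 0).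
split; first by case.
by rewrite big_ord0.
Qed.

Lemma Id_gen s : S s -> Id s.
Proof.
move=> Hs; exists 1%N, (fun _ => 1), (fun _ => 1), (fun _ => s); split => //.
by rewrite big_ord1 mul1r mulr1.
Qed.

Lemma IdD (x y : Rg) : Id x -> Id y -> Id (x + y).
Proof.
move=> [n [a [b [s [Hs ->]]]]] [m [a' [b' [s' [Hs' ->]]]]].
exists (n + m)%N,
  (fun i => match split i with inl j => a j | inr j => a' j end),
  (fun i => match split i with inl j => b j | inr j => b' j end),
  (fun i => match split i with inl j => s j | inr j => s' j end).
split.
  by move=> i; case: (split i).
rewrite big_split_ord.
apply: (@f_equal2 _ _ _ +%R); apply: eq_bigr => i _.
  by rewrite (unsplitK (inl _ i)).
by rewrite (unsplitK (inr _ i)).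
Qed.

Lemma IdM (a x b : Rg) : Id x -> Id (a * x * b).
Proof.
move=> [n [a1 [b1 [s [Hs ->]]]]].
exists n, (fun i => a * a1 i), (fun i => b1 i * b), s; split => //.
rewrite mulr_sumr mulr_suml; apply: eq_bigr => i _.
by rewrite !mulrA.
Qed.

Definition eqv (x y : Rg) := Id (x - y).

Lemma eqv_refl (x : Rg) : eqv x x.
Proof. by rewrite /eqv subrr; exact: Id0. Qed.

Lemma eqv_sym (x y : Rg) : eqv x y -> eqv y x.
Proof.
move=> H; have := IdM (-1) 1 H.
by rewrite mulr1 mulN1r opprB.
Qed.

Lemma eqv_trans (x y z : Rg) : eqv x y -> eqv y z -> eqv x z.
Proof.
move=> H1 H2; have := IdD H1 H2.
by rewrite /eqv addrA subrK.
Qed.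

Lemma eqv_mull (a x y : Rg) : eqv x y -> eqv (a * x) (a * y).
Proof. move=> H; have := IdM a 1 H. by rewrite mulr1 mulrBr. Qed.

Lemma eqv_mulr (a x y : Rg) : eqv x y -> eqv (x * a) (y * a).
Proof. move=> H; have := IdM 1 a H. by rewrite mul1r mulrBl. Qed.

Lemma eqv_mul (x x' y y' : Rg) : eqv x x' -> eqv y y' -> eqv (x * y) (x' * y').
Proof.
move=> H1 H2; apply: (eqv_trans (eqv_mulr y H1)); exact: eqv_mull.
Qed.

Definition c := w [:: Lt; Rt].

Lemma c_E : c = w [:: Lt] * w [:: Rt].
Proof. by rewrite -wcat. Qed.

Lemma w_prime u : w (Rt :: u ++ [:: Lt]) = w [:: Rt] * w u * w [:: Lt].
Proof. by rewrite -cat1s !wcat mulrA. Qed.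

Lemma gen_dyck u : dyck u ->
  eqv (w (Rt :: u ++ [:: Lt]) * c) (c * w (Rt :: u ++ [:: Lt])).
Proof.
move=> Hu; apply: Id_gen; exact: wgen.
Qed.

Lemma comm_c x : dyck x -> eqv (w x * c) (c * w x).
Proof.
elim => [|u v Hu _ Hv IHv].
  by rewrite wnil mul1r mulr1; exact: eqv_refl.
have -> : Rt :: u ++ Lt :: v = (Rt :: u ++ [:: Lt]) ++ v by rewrite /= -catA.
rewrite wcat.
set p := w (Rt :: u ++ [:: Lt]).
apply: (@eqv_trans _ (p * c * w v)).
  rewrite -!mulrA; exact: eqv_mull.
rewrite mulrA; apply: eqv_mulr; exact: gen_dyck.
Qed.

Lemma dyck_dec A : dyck A -> A = [::] \/ (exists u, dyck u /\ A = Rt :: u ++ [:: Lt]) \/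
  (exists A1 A2, [/\ dyck A1, dyck A2, A1 <> [::], A2 <> [::] & A = A1 ++ A2]).
Proof.
case => [|u v Hu Hv]; first by left.
right; case: v Hv => [|x v] Hv; first by left; exists u.
right; exists (Rt :: u ++ [:: Lt]), (x :: v); split => //.
  by apply: (@dcons u [::]) => //; exact: dnil.
by rewrite /= -catA.
Qed.

Lemma comm_all N A B : (size A + size B <= N)%N -> dyck A -> dyck B ->
  eqv (w A * w B) (w B * w A).
Proof.
elim: N A B => [|N IH] A B.
  case: A B => [|? ?] [|? ?] //= _ _ _; rewrite wnil mulr1; exact: eqv_refl.
move=> Hs HA HB.
case: (dyck_dec HA) => [->|[[u [Hu EA]]|[A1 [A2 [H1 H2 N1 N2 EA]]]]].
- rewrite wnil mul1r mulr1; exact: eqv_refl.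
- case: (dyck_dec HB) => [->|[[v [Hv EB]]|[B1 [B2 [G1 G2 M1 M2 EB]]]]].
  + rewrite wnil mul1r mulr1; exact: eqv_refl.
  + have Huv : eqv (w u * w v) (w v * w u).
      apply: IH => //; move: Hs; rewrite EA EB /= !size_cat /=; lia.
    have E1 : w A * w B = w [:: Rt] * (w u * c * w v) * w [:: Lt].
      by rewrite EA EB !w_prime c_E !mulrA.
    have E2 : w B * w A = w [:: Rt] * (w v * c * w u) * w [:: Lt].
      by rewrite EA EB !w_prime c_E !mulrA.
    rewrite E1 E2; apply: eqv_mulr; apply: eqv_mull.
    apply: (@eqv_trans _ (c * w u * w v)).
      by apply: eqv_mulr; exact: comm_c.
    apply: (@eqv_trans _ (c * w v * w u)).
      by rewrite -!mulrA; apply: eqv_mull.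
    by apply: eqv_mulr; apply: eqv_sym; exact: comm_c.
  + have S1 : (size A + size B1 <= N)%N.
      move: Hs; rewrite EB size_cat; case: B2 M2 {G2 EB} => // ? ? _ /=; lia.
    have S2 : (size A + size B2 <= N)%N.
      move: Hs; rewrite EB size_cat; case: B1 M1 {G1 EB S1} => // ? ? _ /=; lia.
    rewrite EB wcat.
    apply: (@eqv_trans _ (w B1 * w A * w B2)).
      by rewrite mulrA; apply: eqv_mulr; exact: IH.
    rewrite -!mulrA; apply: eqv_mull; exact: IH.
- have S1 : (size A1 + size B <= N)%N.
    move: Hs; rewrite EA size_cat; case: A2 N2 {H2 EA} => // ? ? _ /=; lia.
  have S2 : (size A2 + size B <= N)%N.
    move: Hs; rewrite EA size_cat; case: A1 N1 {H1 EA S1} => // ? ? _ /=; lia.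
  rewrite EA wcat.
  apply: (@eqv_trans _ (w A1 * (w B * w A2))).
    by rewrite -mulrA; apply: eqv_mull; exact: IH.
  rewrite !mulrA; apply: eqv_mulr; exact: IH.
Qed.

End Alg.

Unset Implicit Arguments.
Unset Strict Implicit.

Theorem lemma5p1 (P Q : word) :
  upper_prime P -> upper_prime Q ->
  in_twosided_ideal gen_set (wrd P * wrd Q - wrd Q * wrd P).
Proof.
move=> /up_dyck [u [Hu ->]] /up_dyck [v [Hv ->]].
have G : forall x, dyck x -> gen_set (wrd (Rt :: x ++ [:: Lt]) * wrd [:: Lt; Rt]
            - wrd [:: Lt; Rt] * wrd (Rt :: x ++ [:: Lt])).
  move=> x Hx; exists (Rt :: x ++ [:: Lt]); split => //; exact: dyck_up.
have HA : dyck (Rt :: u ++ [:: Lt]) by apply: dcons => //; exact: dnil.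
have HB : dyck (Rt :: v ++ [:: Lt]) by apply: dcons => //; exact: dnil.
exact: (comm_all wrd_cat wrd_nil G (leqnn _) HA HB).
Qed.
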